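(* Let $(I,d)$ and $(I',d')$ be Ptolemy segments. Let $x_1,x_3$ be the boundary points of $I$ and $x'_1,x'_3$ the boundary points of $I'$, and let $x_2$ be an inner point of $I$ and $x'_2$ an inner point of $I'$. Then there exists a unique Möbius homeomorphism $\phi:I\to I'$ with $\phi(x_i)=x'_i$ for $i=1,2,3$.
   Context: A Ptolemy segment is a compact interval $I\subset\mathbb{R}$ with a metric $d$ inducing its standard topology such that $d(x_1,x_3)d(x_2,x_4)=d(x_1,x_2)d(x_3,x_4)+d(x_1,x_4)d(x_3,x_2)$ whenever $x_1,x_2,x_3,x_4$ lie in this order on $I$. A quadruple is admissible if no entry occurs three or four times; the cross ratio triple is $\mathrm{crt}(x,y,z,w)=(d(x,y)d(z,w):d(x,z)d(y,w):d(x,w)d(y,z))\in\mathbb{R}P^2$. A map between metric spaces is Möbius if it is injective and preserves $\mathrm{crt}$ of all admissible quadruples. *)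

(* Defs.v *)
From Stdlib Require Import Reals Lra.
Open Scope R_scope.

Definition inI (a b x : R) : Prop := a <= x <= b.

Definition is_metric_on (a b : R) (d : R -> R -> R) : Prop :=
  (forall x y, inI a b x -> inI a b y -> 0 <= d x y) /\
  (forall x y, inI a b x -> inI a b y -> (d x y = 0 <-> x = y)) /\
  (forall x y, inI a b x -> inI a b y -> d x y = d y x) /\
  (forall x y z, inI a b x -> inI a b y -> inI a b z ->
     d x z <= d x y + d y z).

Definition induces_standard_topology (a b : R) (d : R -> R -> R) : Prop :=
  forall x, inI a b x ->
    (forall eps, 0 < eps -> exists delta, 0 < delta /\
       forall y, inI a b y -> Rabs (x - y) < delta -> d x y < eps) /\
    (forall eps, 0 < eps -> exists delta, 0 < delta /\
       forall y, inI a b y -> d x y < delta -> Rabs (x - y) < eps).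

Definition ptolemy_property (a b : R) (d : R -> R -> R) : Prop :=
  forall x1 x2 x3 x4, inI a b x1 -> inI a b x4 ->
    x1 <= x2 -> x2 <= x3 -> x3 <= x4 ->
    d x1 x3 * d x2 x4 = d x1 x2 * d x3 x4 + d x1 x4 * d x3 x2.

Definition ptolemy_segment (a b : R) (d : R -> R -> R) : Prop :=
  a < b /\ is_metric_on a b d /\ induces_standard_topology a b d /\
  ptolemy_property a b d.

Definition admissible (x y z w : R) : Prop :=
  ~ (x = y /\ y = z) /\ ~ (x = y /\ y = w) /\
  ~ (x = z /\ z = w) /\ ~ (y = z /\ z = w).

Definition rp2_eq (p q : R * R * R) : Prop :=
  exists lam, lam <> 0 /\
    fst (fst q) = lam * fst (fst p) /\
    snd (fst q) = lam * snd (fst p) /\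
    snd q = lam * snd p.

Definition crt (d : R -> R -> R) (x y z w : R) : R * R * R :=
  (d x y * d z w, d x z * d y w, d x w * d y z).

Definition mobius_map (a b : R) (d : R -> R -> R)
    (a' b' : R) (d' : R -> R -> R) (f : R -> R) : Prop :=
  (forall x y, inI a b x -> inI a b y -> f x = f y -> x = y) /\
  (forall x y z w, inI a b x -> inI a b y -> inI a b z -> inI a b w ->
     admissible x y z w ->
     rp2_eq (crt d x y z w) (crt d' (f x) (f y) (f z) (f w))).

Definition continuous_on_metric (a b : R) (d : R -> R -> R)
    (d' : R -> R -> R) (f : R -> R) : Prop :=
  forall x, inI a b x -> forall eps, 0 < eps -> exists delta, 0 < delta /\
    forall y, inI a b y -> d x y < delta -> d' (f x) (f y) < eps.

Definition homeomorphism_on (a b : R) (d : R -> R -> R)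
    (a' b' : R) (d' : R -> R -> R) (f : R -> R) : Prop :=
  (forall x, inI a b x -> inI a' b' (f x)) /\
  continuous_on_metric a b d d' f /\
  exists g : R -> R,
    (forall y, inI a' b' y -> inI a b (g y)) /\
    (forall x, inI a b x -> g (f x) = x) /\
    (forall y, inI a' b' y -> f (g y) = y) /\
    continuous_on_metric a' b' d' d g.

(* Main.v *)
Require Import Defs.
From Stdlib Require Import Reals Lra ClassicalEpsilon.
Open Scope R_scope.

Definition seg (a b : R) (d : R -> R -> R) (p q c : R) : Prop :=
  ptolemy_segment a b d /\ ((p = a /\ q = b) \/ (p = b /\ q = a)) /\ a < c < b.

Definition Mf (d : R -> R -> R) (p q c x : R) := d q x * d p c + d p x * d q c.
Definition Sf (d : R -> R -> R) (p q c x : R) := d q x * d p c / Mf d p q c x.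

Lemma dpos a b d x y : ptolemy_segment a b d -> inI a b x -> inI a b y -> x <> y -> 0 < d x y.
Proof.
  intros [_ [[Hp [Hz _]] _]] Hx Hy Hne.
  destruct (Rle_lt_or_eq_dec 0 (d x y) (Hp x y Hx Hy)) as [h|h]; auto.
  exfalso; apply Hne; apply (Hz x y Hx Hy); auto.
Qed.

Lemma dnn a b d x y : ptolemy_segment a b d -> inI a b x -> inI a b y -> 0 <= d x y.
Proof. intros [_ [[Hp _] _]] Hx Hy; auto. Qed.

Lemma dsym a b d x y : ptolemy_segment a b d -> inI a b x -> inI a b y -> d x y = d y x.
Proof. intros [_ [[_ [_ [Hs _]]] _]] Hx Hy; auto. Qed.

Lemma d0 a b d x : ptolemy_segment a b d -> inI a b x -> d x x = 0.
Proof. intros [_ [[_ [Hz _]] _]] Hx; apply (Hz x x Hx Hx); auto. Qed.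

Lemma seg_in a b d p q c : seg a b d p q c ->
  inI a b p /\ inI a b q /\ inI a b c /\ p <> q /\ p <> c /\ q <> c.
Proof.
  intros [[Hab _] [[[-> ->]|[-> ->]] Hc]]; unfold inI; repeat split; lra.
Qed.

Lemma M_pos a b d p q c x : seg a b d p q c -> inI a b x -> 0 < Mf d p q c x.
Proof.
  intros Hs Hx. pose proof (seg_in _ _ _ _ _ _ Hs) as (Hp&Hq&Hc&Hpq&Hpc&Hqc).
  destruct Hs as [Hd _].
  assert (0 < d p c) by (apply (dpos a b); auto).
  assert (0 < d q c) by (apply (dpos a b); auto).
  assert (0 <= d q x) by (apply (dnn a b); auto).
  assert (0 <= d p x) by (apply (dnn a b); auto).
  unfold Mf.
  destruct (Req_dec x p) as [->|hne].
  - assert (0 < d q p) by (apply (dpos a b); auto). nra.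
  - assert (0 < d p x) by (apply (dpos a b); auto). nra.
Qed.

Lemma E_ab a b d x y : ptolemy_segment a b d -> inI a b x -> inI a b y -> x <= y ->
  d b x * d a y - d b y * d a x = d a b * d x y.
Proof.
  intros Hd Hx Hy Hxy. pose proof Hd as [Hab [_ [_ Hpt]]].
  assert (Ha : inI a b a) by (unfold inI; lra).
  assert (Hb : inI a b b) by (unfold inI; lra).
  pose proof (Hpt a x y b Ha Hb ltac:(unfold inI in Hx; lra) Hxy ltac:(unfold inI in Hy; lra)) as E.
  rewrite (dsym a b d b x), (dsym a b d b y), (dsym a b d x y) by auto. lra.
Qed.

Lemma E_abs a b d p q c x y : seg a b d p q c -> inI a b x -> inI a b y ->
  Rabs (d q x * d p y - d q y * d p x) = d p q * d x y.
Proof.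
  intros Hs Hx Hy. pose proof (seg_in _ _ _ _ _ _ Hs) as (Hp&Hq&_).
  destruct Hs as [Hd [Hpq _]].
  assert (0 <= d p q * d x y).
  { apply Rmult_le_pos; apply (dnn a b); auto. }
  destruct (Rle_dec x y) as [h|h].
  - pose proof (E_ab a b d x y Hd Hx Hy h) as E.
    destruct Hpq as [[-> ->]|[-> ->]].
    + rewrite Rabs_pos_eq by nra. nra.
    + rewrite (dsym a b d b a) in * by auto. rewrite Rabs_left1 by nra. nra.
  - pose proof (E_ab a b d y x Hd Hy Hx ltac:(lra)) as E.
    rewrite (dsym a b d y x) in E by auto.
    destruct Hpq as [[-> ->]|[-> ->]].
    + rewrite Rabs_left1 by nra. nra.
    + rewrite (dsym a b d b a) in * by auto. rewrite Rabs_pos_eq by nra. nra.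
Qed.

Lemma dist_formula a b d p q c x y : seg a b d p q c -> inI a b x -> inI a b y ->
  d x y = Rabs (Sf d p q c x - Sf d p q c y) * Mf d p q c x * Mf d p q c y
          / (d p q * d p c * d q c).
Proof.
  intros Hs Hx Hy. pose proof (seg_in _ _ _ _ _ _ Hs) as (Hp&Hq&Hc&Hpq&Hpc&Hqc).
  pose proof (M_pos _ _ _ _ _ _ _ Hs Hx) as Mx.
  pose proof (M_pos _ _ _ _ _ _ _ Hs Hy) as My.
  pose proof (E_abs _ _ _ _ _ _ _ _ Hs Hx Hy) as E.
  destruct Hs as [Hd _].
  assert (0 < d p c) by (apply (dpos a b); auto).
  assert (0 < d q c) by (apply (dpos a b); auto).
  assert (0 < d p q) by (apply (dpos a b); auto).
  assert (Sf d p q c x - Sf d p q c y =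
    (d p c * d q c / (Mf d p q c x * Mf d p q c y)) * (d q x * d p y - d q y * d p x)).
  { unfold Sf. unfold Mf in *. field. lra. }
  rewrite H2, Rabs_mult, E, Rabs_pos_eq.
  - field. repeat split; lra.
  - apply Rlt_le, Rdiv_lt_0_compat; nra.
Qed.

Lemma S_vals a b d p q c : seg a b d p q c ->
  Sf d p q c q = 0 /\ Sf d p q c p = 1 /\ Sf d p q c c = 1/2.
Proof.
  intros Hs. pose proof (seg_in _ _ _ _ _ _ Hs) as (Hp&Hq&Hc&Hpq&Hpc&Hqc).
  pose proof (M_pos _ _ _ _ _ _ _ Hs Hp) as Mp.
  pose proof (M_pos _ _ _ _ _ _ _ Hs Hc) as Mc.
  destruct Hs as [Hd _].
  assert (0 < d p c) by (apply (dpos a b); auto).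
  assert (0 < d q c) by (apply (dpos a b); auto).
  assert (0 < d q p) by (apply (dpos a b); auto).
  unfold Sf, Mf in *.
  rewrite (d0 a b d q) by auto. rewrite (d0 a b d p) by auto.
  rewrite (dsym a b d q p) in * by auto.
  repeat split; field; nra.
Qed.

Lemma S_range a b d p q c x : seg a b d p q c -> inI a b x ->
  0 <= Sf d p q c x <= 1.
Proof.
  intros Hs Hx. pose proof (seg_in _ _ _ _ _ _ Hs) as (Hp&Hq&Hc&Hpq&Hpc&Hqc).
  pose proof (M_pos _ _ _ _ _ _ _ Hs Hx) as Mx.
  destruct Hs as [Hd _].
  assert (0 <= d p c) by (apply (dnn a b); auto).
  assert (0 <= d q c) by (apply (dnn a b); auto).
  assert (0 <= d q x) by (apply (dnn a b); auto).
  assert (0 <= d p x) by (apply (dnn a b); auto).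
  unfold Sf, Mf in *. split.
  - apply Rmult_le_pos; [nra | left; apply Rinv_0_lt_compat; lra].
  - apply (Rmult_le_reg_r (d q x * d p c + d p x * d q c)); auto.
    unfold Rdiv; rewrite Rmult_assoc, Rinv_l by lra. nra.
Qed.

Lemma S_inj a b d p q c x y : seg a b d p q c -> inI a b x -> inI a b y ->
  Sf d p q c x = Sf d p q c y -> x = y.
Proof.
  intros Hs Hx Hy E. pose proof (dist_formula _ _ _ _ _ _ _ _ Hs Hx Hy) as F.
  rewrite E, Rminus_diag, Rabs_R0 in F.
  destruct Hs as [[_ [[_ [Hz _]] _]] _]. apply (Hz x y Hx Hy). rewrite F. unfold Rdiv. ring.
Qed.

Definition clamp (a b x : R) := Rmax a (Rmin b x).

Lemma clamp_in a b x : a < b -> inI a b (clamp a b x).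
Proof. intros h. unfold clamp, inI, Rmax, Rmin.
  destruct (Rle_dec b x); destruct (Rle_dec a _); lra. Qed.

Lemma clamp_id a b x : inI a b x -> clamp a b x = x.
Proof. unfold clamp, inI, Rmax, Rmin; intros h.
  destruct (Rle_dec b x); destruct (Rle_dec a _); lra. Qed.

Lemma clamp_lip a b x y : a < b -> Rabs (clamp a b x - clamp a b y) <= Rabs (x - y).
Proof. intros h. unfold clamp, Rmax, Rmin.
  destruct (Rle_dec b x); destruct (Rle_dec b y);
  repeat match goal with |- context [Rle_dec ?u ?v] => destruct (Rle_dec u v) end;
  unfold Rabs; repeat match goal with |- context [Rcase_abs ?u] => destruct (Rcase_abs u) end; lra.
Qed.

Lemma Dc_cont a b d z x0 : ptolemy_segment a b d -> inI a b z ->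
  continuity_pt (fun x => d z (clamp a b x)) x0.
Proof.
  intros Hd Hz. pose proof Hd as [Hab [[Hp [Hzr [Hs Ht]]] [Htop _]]].
  intros eps Heps.
  set (u := clamp a b x0). assert (Hu : inI a b u) by (apply clamp_in; auto).
  destruct (proj1 (Htop u Hu) eps Heps) as [del [Hdel H]].
  exists del; split; [lra|].
  intros x [_ Hx]. simpl in *. unfold R_dist in *.
  set (v := clamp a b x). assert (Hv : inI a b v) by (apply clamp_in; auto).
  assert (Hl : Rabs (u - v) < del).
  { pose proof (clamp_lip a b x0 x Hab). rewrite Rabs_minus_sym in Hx. unfold u, v. lra. }
  pose proof (H v Hv Hl) as Hduv.
  pose proof (Ht z u v Hz Hu Hv). pose proof (Ht z v u Hz Hv Hu).
  rewrite (Hs v u Hv Hu) in *.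
  fold v u. unfold Rabs; destruct (Rcase_abs _); lra.
Qed.

Definition Mc a b d p q c x := Mf d p q c (clamp a b x).
Definition Sc a b d p q c x := Sf d p q c (clamp a b x).

Lemma Mc_cont a b d p q c x0 : seg a b d p q c -> continuity_pt (Mc a b d p q c) x0.
Proof.
  intros Hs. pose proof (seg_in _ _ _ _ _ _ Hs) as (Hp&Hq&Hc&_).
  destruct Hs as [Hd _].
  unfold Mc, Mf.
  apply (continuity_pt_plus (fun x => d q (clamp a b x) * d p c) (fun x => d p (clamp a b x) * d q c)).
  - apply (continuity_pt_mult (fun x => d q (clamp a b x)) (fun _ => d p c)).
    apply Dc_cont; auto. apply continuity_pt_const; intros ? ?; auto.
  - apply (continuity_pt_mult (fun x => d p (clamp a b x)) (fun _ => d q c)).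
    apply Dc_cont; auto. apply continuity_pt_const; intros ? ?; auto.
Qed.

Lemma Sc_cont a b d p q c x0 : seg a b d p q c -> continuity_pt (Sc a b d p q c) x0.
Proof.
  intros Hs. pose proof (seg_in _ _ _ _ _ _ Hs) as (Hp&Hq&Hc&_).
  pose proof (Mc_cont _ _ _ _ _ _ x0 Hs) as HM.
  pose proof Hs as [Hd _]. pose proof Hd as [Hab _].
  unfold Sc, Sf.
  apply (continuity_pt_div (fun x => d q (clamp a b x) * d p c) (Mc a b d p q c)); auto.
  - apply (continuity_pt_mult (fun x => d q (clamp a b x)) (fun _ => d p c)).
    apply Dc_cont; auto. apply continuity_pt_const; intros ? ?; auto.
  - unfold Mc. apply Rgt_not_eq, (M_pos a b); auto. apply clamp_in; auto.
Qed.

Lemma S_surj a b d p q c t : seg a b d p q c -> 0 <= t <= 1 ->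
  exists x, inI a b x /\ Sf d p q c x = t.
Proof.
  intros Hs Ht. pose proof (S_vals _ _ _ _ _ _ Hs) as (Sq&Sp&_).
  pose proof Hs as [Hd [Hpq _]]. pose proof Hd as [Hab _].
  assert (Hcont : continuity (fun x => Sc a b d p q c x - t)).
  { intros x. apply (continuity_pt_minus _ (fun _ => t)). apply Sc_cont; auto.
    apply continuity_pt_const; intros ? ?; auto. }
  assert (Ha : inI a b a) by (unfold inI; lra).
  assert (Hb : inI a b b) by (unfold inI; lra).
  destruct (IVT_cor _ a b Hcont (Rlt_le _ _ Hab)) as [z [Hz Ez]].
  - unfold Sc. rewrite !clamp_id by auto.
    destruct Hpq as [[-> ->]|[-> ->]]; rewrite ?Sq, ?Sp; nra.
  - exists z. assert (inI a b z) by (unfold inI; lra). split; auto.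
    unfold Sc in Ez. rewrite clamp_id in Ez by auto. lra.
Qed.

Lemma M_bounds a b d p q c : seg a b d p q c ->
  exists m M, 0 < m /\ forall x, inI a b x -> m <= Mf d p q c x <= M.
Proof.
  intros Hs. pose proof Hs as [[Hab _] _].
  destruct (continuity_ab_maj (Mc a b d p q c) a b (Rlt_le _ _ Hab)) as [xM [HM HxM]].
  { intros; apply Mc_cont; auto. }
  destruct (continuity_ab_min (Mc a b d p q c) a b (Rlt_le _ _ Hab)) as [xm [Hm Hxm]].
  { intros; apply Mc_cont; auto. }
  exists (Mc a b d p q c xm), (Mc a b d p q c xM). split.
  - unfold Mc. rewrite (clamp_id a b xm) by exact Hxm. apply (M_pos a b); auto.
  - intros x Hx. pose proof (HM x Hx); pose proof (Hm x Hx).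
    unfold Mc in *. rewrite (clamp_id a b x), (clamp_id a b xm), (clamp_id a b xM) in * by auto. lra.
Qed.

Definition inv a b d p q c t :=
  epsilon (inhabits a) (fun y => inI a b y /\ Sf d p q c y = t).

Lemma inv_spec a b d p q c t : seg a b d p q c -> 0 <= t <= 1 ->
  inI a b (inv a b d p q c t) /\ Sf d p q c (inv a b d p q c t) = t.
Proof. intros Hs Ht. unfold inv. apply epsilon_spec. apply S_surj; auto. Qed.

Definition Tr (a b : R) (d : R -> R -> R) (p q c a' b' : R) (d' : R -> R -> R) (p' q' c' x : R) :=
  inv a' b' d' p' q' c' (Sf d p q c x).

Lemma T_spec a b d p q c a' b' d' p' q' c' x :
  seg a b d p q c -> seg a' b' d' p' q' c' -> inI a b x ->
  inI a' b' (Tr a b d p q c a' b' d' p' q' c' x) /\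
  Sf d' p' q' c' (Tr a b d p q c a' b' d' p' q' c' x) = Sf d p q c x.
Proof. intros H1 H2 Hx. apply inv_spec; auto. apply (S_range a b d); auto. Qed.

Lemma kpos a b d p q c : seg a b d p q c -> 0 < d p q * d p c * d q c.
Proof.
  intros Hs. pose proof (seg_in _ _ _ _ _ _ Hs) as (Hp&Hq&Hc&Hpq&Hpc&Hqc).
  destruct Hs as [Hd _].
  assert (0 < d p c) by (apply (dpos a b); auto).
  assert (0 < d q c) by (apply (dpos a b); auto).
  assert (0 < d p q) by (apply (dpos a b); auto).
  apply Rmult_lt_0_compat; auto. apply Rmult_lt_0_compat; auto.
Qed.

Lemma T_cont a b d p q c a' b' d' p' q' c' :
  seg a b d p q c -> seg a' b' d' p' q' c' ->
  continuous_on_metric a b d d' (Tr a b d p q c a' b' d' p' q' c').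
Proof.
  intros H1 H2 x Hx eps Heps.
  destruct (M_bounds _ _ _ _ _ _ H1) as [m1 [B1 [Hm1 HB1]]].
  destruct (M_bounds _ _ _ _ _ _ H2) as [m2 [B2 [Hm2 HB2]]].
  pose proof (kpos _ _ _ _ _ _ H1) as k1. pose proof (kpos _ _ _ _ _ _ H2) as k2.
  set (K1 := d p q * d p c * d q c) in *. set (K2 := d' p' q' * d' p' c' * d' q' c') in *.
  assert (HB2p : 0 < B2).
  { destruct (HB2 a'). unfold inI. destruct H2 as [[h _] _]. lra. lra. }
  set (C := K1 * (B2 * B2) / (K2 * (m1 * m1))).
  assert (HC : 0 < C).
  { unfold C. apply Rdiv_lt_0_compat; apply Rmult_lt_0_compat; nra. }
  exists (eps / C). split. { apply Rdiv_lt_0_compat; lra. }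
  intros y Hy Hdxy.
  set (T := Tr a b d p q c a' b' d' p' q' c').
  destruct (T_spec _ _ _ _ _ _ _ _ _ _ _ _ x H1 H2 Hx) as [Tx STx].
  destruct (T_spec _ _ _ _ _ _ _ _ _ _ _ _ y H1 H2 Hy) as [Ty STy].
  fold T in Tx, STx, Ty, STy.
  pose proof (dist_formula _ _ _ _ _ _ _ _ H1 Hx Hy) as F1.
  pose proof (dist_formula _ _ _ _ _ _ _ _ H2 Tx Ty) as F2.
  fold K1 in F1. fold K2 in F2. rewrite STx, STy in F2.
  set (D := Rabs (Sf d p q c x - Sf d p q c y)) in *.
  assert (HD : 0 <= D) by apply Rabs_pos.
  destruct (HB1 x Hx). destruct (HB1 y Hy). destruct (HB2 _ Tx). destruct (HB2 _ Ty).
  assert (L1 : D * (m1 * m1) / K1 <= d x y).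
  { rewrite F1. unfold Rdiv. apply Rmult_le_compat_r. left; apply Rinv_0_lt_compat; lra.
    rewrite Rmult_assoc. apply Rmult_le_compat_l; auto. apply Rmult_le_compat; lra. }
  assert (L2 : d' (T x) (T y) <= D * (B2 * B2) / K2).
  { rewrite F2. unfold Rdiv. apply Rmult_le_compat_r. left; apply Rinv_0_lt_compat; lra.
    rewrite Rmult_assoc. apply Rmult_le_compat_l; auto. apply Rmult_le_compat; lra. }
  assert (L3 : D * (B2 * B2) / K2 = C * (D * (m1 * m1) / K1)).
  { unfold C. field. repeat split; lra. }
  assert (L4 : C * d x y < eps).
  { apply (Rmult_lt_compat_l C) in Hdxy; auto. unfold Rdiv in Hdxy.
    rewrite <- Rmult_assoc, (Rmult_comm C eps), Rmult_assoc, Rinv_r, Rmult_1_r in Hdxy; lra. }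
  assert (C * (D * (m1 * m1) / K1) <= C * d x y) by (apply Rmult_le_compat_l; lra).
  lra.
Qed.

Theorem theorem3p1 (a b : R) (d : R -> R -> R) (a' b' : R) (d' : R -> R -> R)
  (x1 x2 x3 x1' x2' x3' : R) :
  ptolemy_segment a b d -> ptolemy_segment a' b' d' ->
  ((x1 = a /\ x3 = b) \/ (x1 = b /\ x3 = a)) ->
  ((x1' = a' /\ x3' = b') \/ (x1' = b' /\ x3' = a')) ->
  a < x2 < b -> a' < x2' < b' ->
  exists phi : R -> R,
    (homeomorphism_on a b d a' b' d' phi /\ mobius_map a b d a' b' d' phi /\
     phi x1 = x1' /\ phi x2 = x2' /\ phi x3 = x3') /\
    (forall psi : R -> R,
       homeomorphism_on a b d a' b' d' psi /\ mobius_map a b d a' b' d' psi /\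
       psi x1 = x1' /\ psi x2 = x2' /\ psi x3 = x3' ->
       forall x, inI a b x -> psi x = phi x).
Proof.
  intros Hd Hd' H13 H13' Hc Hc'.
  assert (S1 : seg a b d x1 x3 x2) by (split; auto).
  assert (S2 : seg a' b' d' x1' x3' x2') by (split; auto).
  pose proof (seg_in _ _ _ _ _ _ S1) as (Hp&Hq&Hcc&Hpq&Hpc&Hqc).
  pose proof (seg_in _ _ _ _ _ _ S2) as (Hp'&Hq'&Hcc'&Hpq'&Hpc'&Hqc').
  pose proof (S_vals _ _ _ _ _ _ S1) as (V3&V1&V2).
  pose proof (S_vals _ _ _ _ _ _ S2) as (V3'&V1'&V2').
  set (phi := Tr a b d x1 x3 x2 a' b' d' x1' x3' x2').
  set (g := Tr a' b' d' x1' x3' x2' a b d x1 x3 x2).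
  assert (Pphi : forall x, inI a b x -> inI a' b' (phi x) /\
     Sf d' x1' x3' x2' (phi x) = Sf d x1 x3 x2 x) by (intros; apply T_spec; auto).
  assert (Pg : forall y, inI a' b' y -> inI a b (g y) /\
     Sf d x1 x3 x2 (g y) = Sf d' x1' x3' x2' y) by (intros; apply T_spec; auto).
  exists phi. split; [split; [|split; [|split; [|split]]]|].
  - split; [intros; apply Pphi; auto|]. split; [apply T_cont; auto|].
    exists g. split; [intros; apply Pg; auto|]. split; [|split].
    + intros x Hx. destruct (Pphi x Hx) as [h1 h2]. destruct (Pg _ h1) as [h3 h4].
      apply (S_inj _ _ _ _ _ _ _ _ S1); auto. congruence.
    + intros y Hy. destruct (Pg y Hy) as [h1 h2]. destruct (Pphi _ h1) as [h3 h4].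
      apply (S_inj _ _ _ _ _ _ _ _ S2); auto. congruence.
    + apply T_cont; auto.
  - split.
    + intros x y Hx Hy E. destruct (Pphi x Hx) as [h1 h2]. destruct (Pphi y Hy) as [h3 h4].
      apply (S_inj _ _ _ _ _ _ _ _ S1); auto. congruence.
    + intros x y z w Hx Hy Hz Hw _.
      destruct (Pphi x Hx) as [px sx]. destruct (Pphi y Hy) as [py sy].
      destruct (Pphi z Hz) as [pz sz]. destruct (Pphi w Hw) as [pw sw].
      pose proof (kpos _ _ _ _ _ _ S1) as k1. pose proof (kpos _ _ _ _ _ _ S2) as k2.
      set (K1 := d x1 x3 * d x1 x2 * d x3 x2) in *.
      set (K2 := d' x1' x3' * d' x1' x2' * d' x3' x2') in *.
      set (M := Mf d x1 x3 x2). set (M' := Mf d' x1' x3' x2').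
      pose proof (M_pos _ _ _ _ _ _ _ S1 Hx). pose proof (M_pos _ _ _ _ _ _ _ S1 Hy).
      pose proof (M_pos _ _ _ _ _ _ _ S1 Hz). pose proof (M_pos _ _ _ _ _ _ _ S1 Hw).
      fold M in H, H0, H1, H2.
      exists (K1 * K1 * (M' (phi x) * M' (phi y) * M' (phi z) * M' (phi w))
              / (K2 * K2 * (M x * M y * M z * M w))).
      pose proof (M_pos _ _ _ _ _ _ _ S2 px). pose proof (M_pos _ _ _ _ _ _ _ S2 py).
      pose proof (M_pos _ _ _ _ _ _ _ S2 pz). pose proof (M_pos _ _ _ _ _ _ _ S2 pw).
      fold M' in H3, H4, H5, H6.
      split.
      { apply Rgt_not_eq. apply Rdiv_lt_0_compat.
        - apply Rmult_lt_0_compat; [nra|]. repeat apply Rmult_lt_0_compat; auto.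
        - apply Rmult_lt_0_compat; [nra|]. repeat apply Rmult_lt_0_compat; auto. }
      unfold crt; simpl.
      pose proof (dist_formula _ _ _ _ _ _ _ _ S1 Hx Hy) as Exy.
      pose proof (dist_formula _ _ _ _ _ _ _ _ S1 Hz Hw) as Ezw.
      pose proof (dist_formula _ _ _ _ _ _ _ _ S1 Hx Hz) as Exz.
      pose proof (dist_formula _ _ _ _ _ _ _ _ S1 Hy Hw) as Eyw.
      pose proof (dist_formula _ _ _ _ _ _ _ _ S1 Hx Hw) as Exw.
      pose proof (dist_formula _ _ _ _ _ _ _ _ S1 Hy Hz) as Eyz.
      pose proof (dist_formula _ _ _ _ _ _ _ _ S2 px py) as Fxy.
      pose proof (dist_formula _ _ _ _ _ _ _ _ S2 pz pw) as Fzw.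
      pose proof (dist_formula _ _ _ _ _ _ _ _ S2 px pz) as Fxz.
      pose proof (dist_formula _ _ _ _ _ _ _ _ S2 py pw) as Fyw.
      pose proof (dist_formula _ _ _ _ _ _ _ _ S2 px pw) as Fxw.
      pose proof (dist_formula _ _ _ _ _ _ _ _ S2 py pz) as Fyz.
      fold K1 M in Exy, Ezw, Exz, Eyw, Exw, Eyz.
      fold K2 M' in Fxy, Fzw, Fxz, Fyw, Fxw, Fyz.
      rewrite ?sx, ?sy, ?sz, ?sw in Fxy; rewrite ?sx, ?sy, ?sz, ?sw in Fzw; rewrite ?sx, ?sy, ?sz, ?sw in Fxz; rewrite ?sx, ?sy, ?sz, ?sw in Fyw; rewrite ?sx, ?sy, ?sz, ?sw in Fxw; rewrite ?sx, ?sy, ?sz, ?sw in Fyz.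
      rewrite Exy, Ezw, Exz, Eyw, Exw, Eyz, Fxy, Fzw, Fxz, Fyw, Fxw, Fyz.
      repeat split; field; repeat split; lra.
  - apply (S_inj _ _ _ _ _ _ _ _ S2); auto. apply Pphi; auto. rewrite (proj2 (Pphi _ Hp)); congruence.
  - apply (S_inj _ _ _ _ _ _ _ _ S2); auto. apply Pphi; auto. rewrite (proj2 (Pphi _ Hcc)); congruence.
  - apply (S_inj _ _ _ _ _ _ _ _ S2); auto. apply Pphi; auto. rewrite (proj2 (Pphi _ Hq)); congruence.
  - intros psi [[Hin _] [[_ Hm] [e1 [e2 e3]]]] x Hx.
    assert (Hadm : admissible x1 x2 x3 x).
    { unfold admissible. repeat split; intros [u v]; congruence. }
    destruct (Hm x1 x2 x3 x Hp Hcc Hq Hx Hadm) as [lam [Hlam [E1 [E2 E3]]]].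
    rewrite e1, e2, e3 in E1, E3. unfold crt in E1, E2, E3. simpl in E1, E2, E3.
    pose proof (Hin x Hx) as px.
    destruct (Pphi x Hx) as [qx sx].
    apply (S_inj _ _ _ _ _ _ _ _ S2); auto. rewrite sx.
    pose proof (S_range _ _ _ _ _ _ _ S1 Hx) as Rs.
    pose proof (S_range _ _ _ _ _ _ _ S2 px) as Rt.
    pose proof (kpos _ _ _ _ _ _ S1) as k1. pose proof (kpos _ _ _ _ _ _ S2) as k2.
    set (K1 := d x1 x3 * d x1 x2 * d x3 x2) in *.
    set (K2 := d' x1' x3' * d' x1' x2' * d' x3' x2') in *.
    set (M := Mf d x1 x3 x2) in *. set (M' := Mf d' x1' x3' x2') in *.
    pose proof (M_pos _ _ _ _ _ _ _ S1 Hx). pose proof (M_pos _ _ _ _ _ _ _ S1 Hp).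
    pose proof (M_pos _ _ _ _ _ _ _ S1 Hq). pose proof (M_pos _ _ _ _ _ _ _ S1 Hcc).
    pose proof (M_pos _ _ _ _ _ _ _ S2 px). pose proof (M_pos _ _ _ _ _ _ _ S2 Hp').
    pose proof (M_pos _ _ _ _ _ _ _ S2 Hq'). pose proof (M_pos _ _ _ _ _ _ _ S2 Hcc').
    fold M M' in H, H0, H1, H2, H3, H4, H5, H6.
    rewrite (dist_formula _ _ _ _ _ _ _ _ S1 Hp Hcc) in E1.
    rewrite (dist_formula _ _ _ _ _ _ _ _ S1 Hq Hx) in E1.
    rewrite (dist_formula _ _ _ _ _ _ _ _ S1 Hp Hx) in E3.
    rewrite (dist_formula _ _ _ _ _ _ _ _ S1 Hcc Hq) in E3.
    rewrite (dist_formula _ _ _ _ _ _ _ _ S2 Hp' Hcc') in E1.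
    rewrite (dist_formula _ _ _ _ _ _ _ _ S2 Hq' px) in E1.
    rewrite (dist_formula _ _ _ _ _ _ _ _ S2 Hp' px) in E3.
    rewrite (dist_formula _ _ _ _ _ _ _ _ S2 Hcc' Hq') in E3.
    fold K1 K2 M M' in E1, E3.
    rewrite ?V1, ?V2, ?V3, ?V1', ?V2', ?V3' in E1. rewrite ?V1, ?V2, ?V3, ?V1', ?V2', ?V3' in E3.
    set (s := Sf d x1 x3 x2 x) in *. set (t := Sf d' x1' x3' x2' (psi x)) in *.
    assert (R1 : Rabs (1 - 1/2) = 1/2) by (rewrite Rabs_pos_eq; lra).
    assert (R2 : Rabs (1/2 - 0) = 1/2) by (rewrite Rabs_pos_eq; lra).
    assert (R3 : Rabs (0 - s) = s) by (rewrite Rabs_minus_sym, Rabs_pos_eq; lra).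
    assert (R4 : Rabs (0 - t) = t) by (rewrite Rabs_minus_sym, Rabs_pos_eq; lra).
    assert (R5 : Rabs (1 - s) = 1 - s) by (rewrite Rabs_pos_eq; lra).
    assert (R6 : Rabs (1 - t) = 1 - t) by (rewrite Rabs_pos_eq; lra).
    rewrite ?R1, ?R2, ?R3, ?R4, ?R5, ?R6 in E1. rewrite ?R1, ?R2, ?R3, ?R4, ?R5, ?R6 in E3.
    set (X := M' x1' * M' x2' * M' x3' * M' (psi x) / (2 * K2 * K2)) in *.
    set (Y := M x1 * M x2 * M x3 * M x / (2 * K1 * K1)) in *.
    assert (HX : 0 < X).
    { unfold X. apply Rdiv_lt_0_compat; [repeat apply Rmult_lt_0_compat; auto | nra]. }
    assert (E1' : t * X = lam * (s * Y)).
    { unfold X, Y. lazymatch type of E1 with ?L = ?R =>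
        transitivity L; [field; lra | rewrite E1; field; lra] end. }
    assert (E3' : (1 - t) * X = lam * ((1 - s) * Y)).
    { unfold X, Y. lazymatch type of E3 with ?L = ?R =>
        transitivity L; [field; lra | rewrite E3; field; lra] end. }
    assert (XY : X = lam * Y).
    { replace X with (t * X + (1 - t) * X) by ring. rewrite E1', E3'. ring. }
    assert (TS : t * X = s * X) by (rewrite E1', XY; ring).
    apply (Rmult_eq_reg_r X); lra.
Qed.
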